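(* Let $v\in\mathrm{Box}(\Sigma)$ and let $\log_1,\dots,\log_n$ be arbitrary branches of the logarithm on the discs $B^v_1,\dots,B^v_n$. For $U\subset\mathbb C^n$ an open simply connected domain and $z\in U$, consider $\varphi(z,r)=\prod_{j=1}^n\frac{z_j^{\frac1{2\pi i}\log_jr_j}}{\Gamma(\frac1{2\pi i}\log_jr_j+1)}$, analytic on $U\times B^v$. Then the linear operator $\varphi(z,\mathcal R):(K_0(\mathbb P_\Sigma,\mathbb C))_v\to(K_0(\mathbb P_\Sigma,\mathbb C))_v$ is zero unless there exists a cone $\sigma\in\Sigma$ with $\sigma(v)\subset\sigma$ whose rays contain all $v_j\in\mathcal A$ for which $\frac1{2\pi i}\log_jy^v_j$ is not a nonnegative integer.
   Context: $N\cong\mathbb Z^d$, $M=\mathrm{Hom}(N,\mathbb Z)$, $\mathcal A=\{v_1,\dots,v_n\}\subset N$ generating $N$ with a homomorphism $\mathrm h:N\to\mathbb Z$, $\mathrm h(v_j)=1$; $\Sigma$ the simplicial fan supported on $\mathbb R_{\ge0}\mathrm{Conv}(\mathcal A)$ from a regular triangulation with vertices in $\mathcal A$, a stacky fan with the vectors $v_j$ on its rays. $K_0(\mathbb P_\Sigma,\mathbb C)$ is the complexified Grothendieck ring of the toric Deligne–Mumford stack $\mathbb P_\Sigma$ (Borisov–Chen–Smith), isomorphic to $\mathbb C[R_1^{\pm1},\dots,R_n^{\pm1}]$ modulo $\prod_jR_j^{\langle m,v_j\rangle}=1$ ($m\in M$) and $\prod_{j\in J}(1-R_j)=0$ whenever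 $\{v_j:j\in J\}$ do not generate a cone of $\Sigma$. $\mathrm{Box}(\Sigma)$: $v=\sum q^v_jv_j\in N$ with $0\le q^v_j<1$, $q^v_j=0$ unless $v_j$ spans a ray of a fixed maximal cone; $\sigma(v)$ the smallest cone containing $v$; $y^v_j=e^{2\pi iq^v_j}$. $K_0(\mathbb P_\Sigma,\mathbb C)$ is Artinian and is the direct sum of its localizations $(K_0(\mathbb P_\Sigma,\mathbb C))_v$ at the maximal ideals $(R_1-y^v_1,\dots,R_n-y^v_n)$, $v\in\mathrm{Box}(\Sigma)$. $\mathcal R_j$ is the operator of multiplication by $R_j$; on $(K_0)_v$ its spectrum is $\{y^v_j\}$. $B^v_j$ is an open disc of small radius centred at $y^v_j$ not containing $0$, $B^v=B^v_1\times\dots\times B^v_n$. For an analytic function $\phi$ on a neighbourhood of the joint spectrum, $\phi(\mathcal R)$ denotes the usual holomorphic functional calculus of commuting operators (equal to $P(\mathcal R)$ for any polynomial $P$ whose derivatives agree with those of $\phi$ at the spectrum up to the relevant indices). $z_j^a=e^{a(\log|z_j|+i\arg z_j)}$. *)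

(* Defs.v *)
From HB Require Import structures.
From mathcomp Require Import all_boot all_order all_algebra.
From mathcomp Require Import mpoly.
From mathcomp Require Import all_classical all_reals all_analysis.
From mathcomp Require Import complex.
Set Implicit Arguments. Unset Strict Implicit. Unset Printing Implicit Defensive.
Import Order.TTheory GRing.Theory Num.Theory.
Import numFieldNormedType.Exports.
Local Open Scope ring_scope.
Local Open Scope complex_scope.

Definition Cx (R : realType) : numFieldType := R[i].

Section Complex.
Variable R : realType.
Local Notation C := (Cx R).

Definition cexp (w : C) : C := limn (series (fun k : nat => w ^+ k / (k`!)%:R)).

Definition two_pi_i : C := 2%:R * (pi : R)%:C * 'i.

(* the reciprocal Gamma function 1/Gamma(s), via Gauss's product formula
   1/Gamma(s) = lim_m s(s+1)...(s+m) / (m! m^s),  m^s = exp(s ln m);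
   it is entire and vanishes exactly at s = 0,-1,-2,... *)
Definition rgamma (s : C) : C :=
  limn (fun m : nat => (\prod_(k < m.+1) (s + k%:R)) /
                       ((m`!)%:R * cexp (s * (ln (m%:R : R))%:C))).

Definition disc (c : C) (rho : R) : set C := [set r : C | `|r - c| < rho%:C].

Definition cderive (f : C -> C) (x : C) : C := derive1 (R := C) (V := C) f x.

Definition upd n (r : 'I_n -> C) (j : 'I_n) (w : C) : 'I_n -> C :=
  fun k => if k == j then w else r k.
Definition pderiv n (j : 'I_n) (F : ('I_n -> C) -> C) : ('I_n -> C) -> C :=
  fun r => cderive (fun w => F (upd r j w)) (r j).
Definition pderivs n (al : 'I_n -> nat) (F : ('I_n -> C) -> C) : ('I_n -> C) -> C :=
  foldr (fun j => iter (al j) (pderiv j)) F (enum 'I_n).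
End Complex.

(* Fans from regular triangulations.  A = {v_1..v_n} in N = Z^d,       *)
Section Fan.
Variables (R : realType) (n d : nat) (v : 'I_n -> 'I_d -> int) (w : 'I_n -> R).

Definition pairv (psi : 'I_d -> R) (x : 'I_d -> int) : R :=
  \sum_(k < d) psi k * (x k)%:~R.

(* psi is a lower supporting functional of the lifted points (v_i, w_i) *)
Definition lower_support (psi : 'I_d -> R) : Prop :=
  forall i, pairv psi (v i) <= w i.

(* genericity: every lower face of the lifted configuration is a simplex,
   i.e. the points of A on it are linearly independent; then the lower faces
   project to a (regular) triangulation of Conv(A) with vertices in A *)
Definition regular_triangulation_heights : Prop :=
  forall psi, lower_support psi ->
  forall c : 'I_n -> R,
    (forall i, c i != 0 -> pairv psi (v i) = w i) ->
    (forall k, \sum_(i < n) c i * (v i k)%:~R = 0) ->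
    forall i, c i = 0.

(* {v_j : j in J} generates a cone of Sigma (J is (contained in) the vertex
   set of a simplex of the regular triangulation) *)
Definition fan_cone (J : {set 'I_n}) : Prop :=
  exists psi, lower_support psi /\ (forall j, j \in J -> pairv psi (v j) = w j).
End Fan.

(* The complexified K-theory ring K_0(P_Sigma, C), presented as a       *)
(* quotient of the Laurent polynomial ring C[R_j^{+-1}], written as     *)
(* C[R_1..R_n, S_1..S_n] / (R_j S_j - 1, ...).                          *)
Section K0.
Variables (R : realType) (n d : nat) (v : 'I_n -> 'I_d -> int) (w : 'I_n -> R).
Local Notation C := (Cx R).
Local Notation LP := (mpoly.mpoly (n + n) C).

Definition Rvar (j : 'I_n) : LP := @mpoly.mpolyX (n + n) C (mpoly.mnm1 (lshift n j)).
Definition Svar (j : 'I_n) : LP := @mpoly.mpolyX (n + n) C (mpoly.mnm1 (rshift n j)).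

Definition Rpow (j : 'I_n) (e : int) : LP :=
  if (0 <= e)%R then Rvar j ^+ `|e|%N else Svar j ^+ `|e|%N.

Inductive K0_rel : LP -> Prop :=
| K0_rel_inv j : K0_rel (Rvar j * Svar j - 1)
| K0_rel_lin (m : 'I_d -> int) :
    K0_rel (\prod_(j < n) Rpow j (\sum_(k < d) m k * v j k) - 1)
| K0_rel_SR (J : {set 'I_n}) : ~ fan_cone v w J -> K0_rel (\prod_(j in J) (1 - Rvar j)).

Inductive in_ideal (G : LP -> Prop) : LP -> Prop :=
| in_ideal0 : in_ideal G 0
| in_ideal_gen g a p : G g -> in_ideal G p -> in_ideal G (a * g + p).

Definition laurent_pt (y : 'I_n -> C) (i : 'I_(n + n)) : C :=
  match fintype.split i with inl j => y j | inr j => (y j)^-1 end.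

(* the class of p is zero in the localization (K_0)_v of K_0 at the maximal
   ideal (R_1 - y_1, ..., R_n - y_n): some s outside the maximal ideal
   satisfies s p = 0 in K_0 *)
Definition loc_zero (y : 'I_n -> C) (p : LP) : Prop :=
  exists s : LP, mpoly.meval (laurent_pt y) s != 0 /\ in_ideal K0_rel (s * p).

Definition embedP (P : mpoly.mpoly n C) : LP :=
  mpoly.mmap (@mpoly.mpolyC (n + n) C) Rvar P.

Definition mderivs (al : 'I_n -> nat) (P : mpoly.mpoly n C) : mpoly.mpoly n C :=
  foldr (fun j => iter (al j) (@mpoly.mderiv n C j)) P (enum 'I_n).
End K0.

Section Phi.
Variable R : realType.
Local Notation C := (Cx R).

Definition boxy n (q : 'I_n -> R) (j : 'I_n) : C := cexp (two_pi_i R * (q j)%:C).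

(* z^a = exp(a (log|z| + i arg z)), with theta a chosen value of arg z *)
Definition cpow (z : C) (theta : R) (a : C) : C :=
  cexp (a * ((ln (complex.Re (`|z| : R[i])))%:C + 'i * theta%:C)).

Definition phi n (logb : 'I_n -> C -> C) (z : 'I_n -> C) (theta : 'I_n -> R)
  (r : 'I_n -> C) : C :=
  \prod_(j < n) (cpow (z j) (theta j) (logb j (r j) / two_pi_i R) *
                 rgamma (logb j (r j) / two_pi_i R + 1)).
End Phi.

Local Open Scope classical_set_scope.
Definition log_branch (R : realType) (c : Cx R) (rho : R) (f : Cx R -> Cx R) : Prop :=
  {within disc c rho, continuous f} /\ (forall r, disc c rho r -> cexp (f r) = r).

(* Main.v *)
Require Import Defs.
From HB Require Import structures.
From mathcomp Require Import all_boot all_order all_algebra.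
From mathcomp Require Import mpoly.
From mathcomp Require Import all_classical all_reals all_analysis.
From mathcomp Require Import complex.
From mathcomp Require Import ring lra zify.
Set Implicit Arguments. Unset Strict Implicit. Unset Printing Implicit Defensive.
Import Order.TTheory GRing.Theory Num.Theory.
Import numFieldNormedType.Exports.
Local Open Scope ring_scope.
Local Open Scope complex_scope.

Local Open Scope classical_set_scope.

Section Tri.
Variable K : numFieldType.

Lemma sum_tri m (F : nat -> nat -> K) :
  \sum_(k < m) \sum_(i < k.+1) F i (k - i)%N =
  \sum_(i < m) \sum_(j < m | (i + j < m)%N) F i j.
Proof.
elim: m => [|m IH]; first by rewrite !big_ord0.
rewrite big_ord_recr /= IH.
have E : forall i j : 'I_m.+1, (i + j < m.+1)%N = (i + j < m)%N || (i + j == m)%N.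
  by move=> i j; rewrite ltnS leq_eqVlt orbC.
transitivity (\sum_(i < m.+1) \sum_(j < m.+1 | (i + j < m)%N) F i j +
              \sum_(i < m.+1) \sum_(j < m.+1 | (i + j == m)%N) F i j).
  congr (_ + _).
    rewrite [RHS]big_ord_recr /= [X in _ + X]big1 ?addr0; last first.
      by move=> j; rewrite ltnNge leq_addr.
    apply: eq_bigr => i _.
    rewrite [RHS]big_mkcond [RHS]big_ord_recr /= ltnNge leq_addl /= addr0.
    by rewrite -big_mkcond.
  apply: eq_bigr => i _.
  rewrite (bigD1 (Ordinal (leq_subr i m : (m - i < m.+1)%N))) /=; last by rewrite subnKC // -ltnS.
  rewrite big1 ?addr0 // => j /andP[/eqP Hj Hne].
  case/eqP: Hne; apply: val_inj => /=. apply/eqP; rewrite -(eqn_add2l i) subnKC; first by apply/eqP.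
  by rewrite -(ltnS i m); apply: ltn_ord.
rewrite -big_split /=; apply: eq_bigr => i _.
rewrite [RHS](bigID (fun j : 'I_m.+1 => (i + j < m)%N)) /=.
congr (_ + _); apply: eq_bigl => j; rewrite E.
  by case: (ltnP (i + j) m) => H /=; rewrite ?andbT ?andbF.
by case: (ltngtP (i + j) m) => H /=; rewrite ?andbT ?andbF.
Qed.
End Tri.

Section ExpSum.
Variable K : numFieldType.
Definition Es (a : K) m := \sum_(k < m) a ^+ k / (k`!)%:R.

Lemma binom_fact (a b : K) k :
  (a + b) ^+ k / (k`!)%:R =
  \sum_(i < k.+1) (a ^+ i / (i`!)%:R * (b ^+ (k - i)%N / ((k - i)%N`!)%:R)).
Proof.
rewrite addrC exprDn mulr_suml; apply: eq_bigr => i _.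
have hi : (i <= k)%N by rewrite -ltnS.
have := bin_fact hi => /(congr1 (fun x : nat => x%:R : K)).
rewrite natrM natrM => Hb.
have f1 : ((i`!)%:R : K) != 0 by rewrite pnatr_eq0 -lt0n fact_gt0.
have f2 : (((k - i)%N`!)%:R : K) != 0 by rewrite pnatr_eq0 -lt0n fact_gt0.
have f3 : ((k`!)%:R : K) != 0 by rewrite pnatr_eq0 -lt0n fact_gt0.
rewrite -Hb -mulr_natr.
field.
rewrite f1 f2 /=; apply/eqP => h; by move: f3; rewrite -Hb h mul0r eqxx.
Qed.

Lemma expsum_mul (a b : K) m :
  Es a m * Es b m - Es (a + b) m =
  \sum_(i < m) \sum_(j < m | ~~ (i + j < m)%N)
     (a ^+ i / (i`!)%:R * (b ^+ j / (j`!)%:R)).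
Proof.
have -> : Es (a + b) m = \sum_(k < m) \sum_(i < k.+1)
   (a ^+ i / (i`!)%:R * (b ^+ (k - i)%N / ((k - i)%N`!)%:R)).
  by apply: eq_bigr => k _; exact: binom_fact.
rewrite /Es (@sum_tri K m (fun i j => a ^+ i / (i`!)%:R * (b ^+ j / (j`!)%:R))).
rewrite mulr_suml.
rewrite (eq_bigr (fun i : 'I_m => \sum_(j < m) (a ^+ i / (i`!)%:R * (b ^+ j / (j`!)%:R)))); last first.
  by move=> i _; rewrite mulr_sumr.
rewrite -sumrB; apply: eq_bigr => i _.
rewrite (bigID (fun j : 'I_m => (i + j < m)%N)) /=.
by rewrite addrC addrK.
Qed.
End ExpSum.

Section CExp.
Variable R : realType.
Local Notation C := (Cx R).

Lemma normC_real (x : R) : `|(x%:C : C)| = (`|x|)%:C.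
Proof.
rewrite (@normc_def R) /=. congr (_%:C).
by rewrite expr0n /= addr0 sqrtr_sqr.
Qed.

Lemma posC (e : C) : 0 < e -> 0 < complex.Re e /\ e = (complex.Re e)%:C.
Proof.
rewrite (@ltcE R) /= => /andP[/eqP hi hr]; split => //.
by case: e hi hr => a b /= -> _.
Qed.

Lemma realC_cvg (u : nat -> R) (l : R) :
  u @ \oo --> l -> (fun m => ((u m)%:C : C)) @ \oo --> (l%:C : C).
Proof.
move/cvgrPdist_lt => H; apply/cvgrPdist_lt => e /posC [e0 ->].
have := H _ e0; apply: filterS => m hm.
rewrite -rmorphB normC_real (@ltcR R).
exact: hm.
Qed.

Lemma Es_real (r : R) m : Es (r%:C : C) m = (series (exp_coeff r) m)%:C.
Proof.
rewrite /series /= big_mkord rmorph_sum /=; apply: eq_bigr => k _.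
by rewrite /exp_coeff /= rmorphM rmorphXn fmorphV rmorph_nat.
Qed.

Lemma Es_real_cvg (r : R) : (fun m => Es (r%:C : C) m) @ \oo --> ((expR r)%:C : C).
Proof.
under eq_fun do rewrite Es_real.
apply: realC_cvg. exact: is_cvg_series_exp_coeff.
Qed.

Lemma ipow_even j : ('i : C) ^+ (j.*2) = ((-1) ^+ j : R)%:C.
Proof. by rewrite -mul2n exprM (@sqr_i R) rmorphXn rmorphN rmorph1. Qed.

Lemma term_i (y : R) k : ('i * y%:C : C) ^+ k / (k`!)%:R =
  (cos_coeff y k)%:C + 'i * (sin_coeff y k)%:C.
Proof.
have := odd_double_half k; move: (k./2) => j; case: (odd k) => /= <-.
- rewrite add1n cos_coeff_odd rmorph0 add0r exprMn exprS ipow_even.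
  rewrite /sin_coeff /= odd_double /= doubleK mul1r.
  rewrite !rmorphM rmorphXn fmorphV !rmorph_nat /= rmorphXn.
  by rewrite -!mulrA rmorphXn.
- rewrite -[(_ + j.*2)%N]/(j.*2) sin_coeff_even rmorph0 mulr0 addr0 exprMn ipow_even.
  rewrite /cos_coeff /= odd_double /= doubleK mul1r.
  rewrite !rmorphM rmorphXn fmorphV !rmorph_nat /=.
  by rewrite -exprnP !rmorphXn.
Qed.

End CExp.

Local Open Scope classical_set_scope.
Section CExp2. Variable R : realType. Local Notation C := (Cx R).
Lemma Es_i_cvg (y : R) :
  (fun m => Es ('i * y%:C : C) m) @ \oo --> ((cos y)%:C + 'i * (sin y)%:C : C).
Proof.
have E m : Es ('i * y%:C : C) m =
   (series (cos_coeff y) m)%:C + 'i * (series (sin_coeff y) m)%:C.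
  rewrite /Es; under eq_bigr => k _ do rewrite term_i.
  rewrite big_split /= -mulr_sumr.
  by rewrite /series /= !big_mkord !rmorph_sum.
under eq_fun do rewrite E.
apply: cvgD.
  apply: realC_cvg; rewrite unlock; exact: is_cvg_series_cos_coeff.
apply: cvgMr.
apply: realC_cvg; rewrite unlock; exact: is_cvg_series_sin_coeff.
Qed.

Lemma normC_realE (a : C) : exists r : R, `|a| = r%:C.
Proof. by exists (Num.sqrt (complex.Re a ^+ 2 + complex.Im a ^+ 2)); rewrite (@normc_def R). Qed.

Lemma D_cvg0 (a b : C) :
  (fun m => Es a m * Es b m - Es (a + b) m) @ \oo --> (0 : C).
Proof.
have [ra Ha] := normC_realE a.
have [rb Hb] := normC_realE b.
set V := fun m => Es `|a| m * Es `|b| m - Es (`|a| + `|b|) m.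
have HV : V @ \oo --> (0 : C).
  have -> : (0 : C) = (expR ra)%:C * (expR rb)%:C - (expR (ra + rb))%:C.
    by rewrite expRD rmorphM subrr.
  rewrite /V Ha Hb -rmorphD.
  apply: cvgB; last exact: Es_real_cvg.
  by apply: cvgM; exact: Es_real_cvg.
have Hle m : `|Es a m * Es b m - Es (a + b) m| <= V m.
  rewrite /V !expsum_mul.
  apply: le_trans (ler_norm_sum _ _ _) _.
  apply: ler_sum => i _.
  apply: le_trans (ler_norm_sum _ _ _) _.
  apply: ler_sum => j _.
  by rewrite normrM !normrM !normfV !normrX !normr_nat.
apply/cvgrPdist_lt => e e0.
move/cvgrPdist_lt: HV => /(_ e e0); apply: filterS => m.
move=> hm.
have h0 : 0 <= V m := le_trans (normr_ge0 _) (Hle m).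
rewrite sub0r normrN.
apply: le_lt_trans (Hle m) _.
by move: hm; rewrite sub0r normrN ger0_norm.
Qed.

Lemma Es_add_cvg (a b A B : C) :
  (fun m => Es a m) @ \oo --> A -> (fun m => Es b m) @ \oo --> B ->
  (fun m => Es (a + b) m) @ \oo --> A * B.
Proof.
move=> HA HB.
have H1 : (fun m => Es a m * Es b m) @ \oo --> A * B.
  exact: (@cvgM _ _ _ _ (fun m => Es a m) (fun m => Es b m) A B HA HB).
have H2 : (fun m => Es a m * Es b m) - (fun m => Es a m * Es b m - Es (a + b) m) @ \oo --> A * B - 0.
  exact: (@cvgB _ _ _ _ _ (fun m => Es a m * Es b m) (fun m => Es a m * Es b m - Es (a + b) m) (A * B) 0 H1 (D_cvg0 a b)).
rewrite subr0 in H2.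
have E : (fun m => Es (a + b) m) =
  ((fun m => Es a m * Es b m) - (fun m => Es a m * Es b m - Es (a + b) m)).
  by apply/funext => m /=; rewrite subKr.
by rewrite E.
Qed.

Lemma cexp_formula (x y : R) :
  cexp (x%:C + 'i * y%:C : C) = (expR x)%:C * ((cos y)%:C + 'i * (sin y)%:C).
Proof.
rewrite /cexp.
have -> : series (fun k : nat => (x%:C + 'i * y%:C : C) ^+ k / (k`!)%:R) =
          (fun m => Es (x%:C + 'i * y%:C : C) m).
  by apply/funext => m; rewrite /series /= big_mkord.
apply: (cvg_lim (@norm_hausdorff _ _)).
exact (Es_add_cvg (@Es_real_cvg R x) (@Es_i_cvg y)).
Qed.
End CExp2.

Local Open Scope classical_set_scope.

Section CExp3.
Variable R : realType.
Local Notation C := (Cx R).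

Lemma cos_addint (y : R) (k : int) : cos (y + pi *+ 2 * k%:~R) = cos y.
Proof.
case: k => m.
  by rewrite -[(Posz m)%:~R]/(m%:R : R) mulr_natr (periodicn (@cosD2pi R)).
rewrite NegzE mulrN -[y in RHS](subrK (pi *+ 2 * (Posz m.+1)%:~R)).
by rewrite -[(Posz m.+1)%:~R]/(m.+1%:R : R) mulr_natr (periodicn (@cosD2pi R)).
Qed.

Lemma cos_eq1 (y : R) : cos y = 1 -> exists k : int, y = pi *+ 2 * k%:~R.
Proof.
move=> hy.
have p0 : 0 < pi *+ 2 :> R by rewrite mulrn_wgt0 // pi_gt0.
set k := Num.floor (y / (pi *+ 2)).
exists k.
set t := y - pi *+ 2 * k%:~R.
have /andP[hk1 hk2] := floor_itv (y / (pi *+ 2)).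
have h1 : k%:~R * (pi *+ 2) <= y by rewrite -ler_pdivlMr.
have h2 : y < (k + 1)%:~R * (pi *+ 2) by rewrite -ltr_pdivrMr.
rewrite intrD mulrDl mul1r in h2.
have t0 : 0 <= t by rewrite /t; lra.
have t2 : t < pi *+ 2 by rewrite /t; lra.
have ct : cos t = 1.
  by rewrite -hy -(cos_addint t k) /t subrK.
suff : t = 0 by move/eqP; rewrite subr_eq0 => /eqP.
have pi0 := @pi_gt0 R.
have c0 : cos 0 = 1 :> R := @cos0 R.
case: (lerP t pi) => htp.
  apply: cos_inj; rewrite ?in_itv /= ?t0 ?htp ?lexx ?(ltW pi0) //.
  by rewrite ct c0.
have : cos (pi *+ 2 - t) = 1.
  by rewrite -cosN opprB -(cos_addint (t - pi *+ 2) 1) mulr1 subrK.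
move=> h3.
have : pi *+ 2 - t = 0.
  apply: cos_inj; rewrite ?in_itv /= ?lexx ?(ltW pi0) //.
    rewrite subr_ge0 (ltW t2) /=.
    by rewrite lerBlDr mulr2n lerD2l ltW.
  by rewrite h3 c0.
by move/eqP; rewrite subr_eq0 => /eqP ht; move: t2; rewrite ht ltxx.
Qed.


Lemma cexp_rect (x y : R) :
  cexp (x%:C + 'i * y%:C : C) = (expR x * cos y) +i* (expR x * sin y).
Proof.
rewrite cexp_formula; apply/eqP; rewrite eq_complex /=.
by apply/andP; split; apply/eqP; ring.
Qed.

Lemma cexp_eq1_core (x y : R) : cexp (x%:C + 'i * y%:C : C) = 1 ->
  x = 0 /\ exists k : int, y = pi *+ 2 * k%:~R.
Proof.
rewrite cexp_rect => -[h1 h2].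
have e0 := expR_gt0 x.
have s0 : sin y = 0.
  by move/eqP: h2; rewrite mulf_eq0 gt_eqF //= => /eqP.
have := sin0cos1 s0.
case: (lerP 0 (cos y)) => hc.
  rewrite ger0_norm // => c1.
  split; last exact: cos_eq1.
  apply: expR_inj; rewrite expR0 -h1 c1 mulr1 //.
rewrite ltr0_norm // => /eqP; rewrite eqr_oppLR => /eqP c1.
by move: h1; rewrite c1 mulrN1 => h; move: e0; rewrite -oppr_lt0 h ltr10.
Qed.

Lemma two_pi_i_neq0 : two_pi_i R != 0.
Proof.
rewrite /two_pi_i !mulf_neq0 //.
- by rewrite (@eq_complex R) /= negb_and (gt_eqF (@pi_gt0 R)).
- by rewrite (@eq_complex R) /= negb_and oner_eq0 orbT.
Qed.

Lemma two_pi_i_real (t : R) : two_pi_i R * t%:C = 0%:C + 'i * (pi *+ 2 * t)%:C.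
Proof.
rewrite /two_pi_i rmorph0 add0r !rmorphM rmorphMn /=.
rewrite -mulr_natl; ring.
Qed.

Lemma cexp_eq1 (w : C) : cexp w = 1 -> exists k : int, w = two_pi_i R * k%:~R.
Proof.
rewrite [w](@complexE R) => /cexp_eq1_core [-> [k hk]].
exists k.
have -> : (k%:~R : C) = (k%:~R : R)%:C by rewrite rmorph_int.
by rewrite two_pi_i_real hk.
Qed.

Lemma cexp0 : cexp (0 : C) = 1.
Proof.
have -> : (0 : C) = 0%:C + 'i * 0%:C by rewrite rmorph0 mulr0 addr0.
rewrite cexp_rect expR0 cos0 sin0 !mul1r.
by [].
Qed.

Lemma cexp_2piq (q : R) : 0 < q < 1 -> cexp (two_pi_i R * q%:C) != 1.
Proof.
move=> /andP[q0 q1]; apply/eqP.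
rewrite two_pi_i_real => /cexp_eq1_core [_ [k hk]].
have p0 : 0 < pi *+ 2 :> R by rewrite mulrn_wgt0 // pi_gt0.
have hq : q = k%:~R.
  by apply: (mulfI (negbT (gt_eqF p0))); rewrite hk.
move: q0 q1; rewrite hq ltr0z => k0; rewrite -[1]/(1%:~R : R) ltr_int.
by move=> k1; lia.
Qed.
End CExp3.

Local Open Scope classical_set_scope.

Section Gam.
Variable R : realType.
Local Notation C := (Cx R).

Lemma rgamma_negint (k : int) : (k < 0)%R -> rgamma ((k%:~R : C) + 1) = 0.
Proof.
case: k => // m _.
have -> : ((Negz m)%:~R : C) + 1 = - (m%:R).
  by rewrite NegzE mulrNz -[(Posz m.+1)%:~R]/(m.+1%:R : C) -natr1 opprD addrNK.
rewrite /rgamma; apply: (lim_near_cst (@norm_hausdorff _ _)).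
exists m => // M /= hM.
have hm : (m < M.+1)%N by rewrite ltnS.
rewrite (bigD1 (Ordinal hm)) //= addNr mul0r mul0r.
by [].
Qed.

Lemma pderiv_vanish n (F : ('I_n -> C) -> C) (j0 k : 'I_n) (c : C) :
  k != j0 -> (forall r, r j0 = c -> F r = 0) ->
  forall r, r j0 = c -> pderiv k F r = 0.
Proof.
move=> hk hF r hr.
rewrite /pderiv /cderive.
have -> : (fun w => F (upd r k w)) = cst 0.
  apply/funext => w; apply: hF.
  by rewrite /upd eq_sym (negbTE hk).
exact: derive1_cst.
Qed.

Lemma pderivs_vanish n (al : 'I_n -> nat) (F : ('I_n -> C) -> C) (j0 : 'I_n) (c : C) :
  al j0 = 0%N -> (forall r, r j0 = c -> F r = 0) ->
  forall r, r j0 = c -> pderivs al F r = 0.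
Proof.
move=> ha hF.
rewrite /pderivs; elim: (enum 'I_n) => [|k s IH] //=.
have [->|hk] := eqVneq k j0; first by rewrite ha.
elim: (al k) => [|i IHi] //=.
exact: pderiv_vanish.
Qed.

Lemma phi_vanish n (logb : 'I_n -> C -> C) z theta (j : 'I_n) (c : C) :
  rgamma (logb j c / two_pi_i R + 1) = 0 ->
  forall r, r j = c -> phi logb z theta r = 0.
Proof.
move=> hg r hr.
rewrite /phi (bigD1 j) //= hr hg mulr0 mul0r.
by [].
Qed.
End Gam.

Local Open Scope classical_set_scope.

Section Alg.
Variable R : realType.
Local Notation C := (Cx R).
Variable n : nat.
Local Notation P := (mpoly n C).

Definition shift_t (y : 'I_n -> C) : n.-tuple P := [tuple ('X_i + (y i)%:MP : P) | i < n].

Lemma mmap_comp (S : comRingType) (f : {rmorphism C -> S}) (g : 'I_n -> S) (p : P) (lq : n.-tuple P) :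
  mmap f g (p \mPo lq) = mmap f (fun i => mmap f g (tnth lq i)) p.
Proof.
rewrite comp_mpolyE raddf_sum /mmap /=; apply: eq_bigr => m _.
rewrite mmapZ rmorph_prod /mmap1; congr (_ * _); apply: eq_bigr => i _.
by rewrite rmorphXn.
Qed.

Lemma mderiv_shift (y : 'I_n -> C) (i : 'I_n) (p0 : P) :
  mderiv i (p0 \mPo shift_t y) = (mderiv i p0) \mPo shift_t y.
Proof.
pose Pr (q : P) := mderiv i (q \mPo shift_t y) = (mderiv i q) \mPo shift_t y.
have PrD p q : Pr p -> Pr q -> Pr (p + q).
  rewrite /Pr => hp hq; rewrite comp_mpolyD mderivD [in RHS]mderivD [in RHS]comp_mpolyD.
  exact: (congr2 +%R hp hq).
have PrZ c p : Pr p -> Pr (c *: p).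
  by rewrite /Pr => hp; rewrite comp_mpolyZ mderivZ hp mderivZ comp_mpolyZ.
have cM (a b : P) : (a * b) \mPo shift_t y = (a \mPo shift_t y) * (b \mPo shift_t y).
  exact: (comp_mpoly_is_multiplicative _).1.
have PrM p q : Pr p -> Pr q -> Pr (p * q).
  rewrite /Pr => hp hq; rewrite cM mderivM [in RHS]mderivM [in RHS]comp_mpolyD [in RHS]cM [in RHS]cM.
  exact: (congr2 +%R (congr1 (fun t => t * (q \mPo shift_t y)) hp) (congr1 (fun t => (p \mPo shift_t y) * t) hq)).
have Pr1 : Pr 1.
  by rewrite /Pr comp_mpoly1 -mpolyC1 mderivC comp_mpolyC.
have PrX k : Pr 'X_k.
  rewrite /Pr comp_mpolyXU -tnth_nth tnth_mktuple mderivD mderivC addr0.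
  rewrite mderivX mnm1E.
  have [->|hk] := eqVneq k i.
    have -> : (U_(i) - U_(i))%MM = 0%MM by apply/mnmP => l; rewrite !mnmE subnn.
    by rewrite mpolyX0 scale1r comp_mpoly1.
  by rewrite scale0r comp_mpoly0.
have Pr0 : Pr 0 by rewrite /Pr comp_mpoly0 mderiv0 comp_mpoly0.
suff H : forall s : seq _, Pr (\sum_(m <- s) p0@_m *: 'X_[m]).
  by have := H (msupp p0); rewrite -mpolyE.
elim => [|m s IH]; first by rewrite big_nil.
rewrite big_cons; apply: (PrD _ _ _ IH); apply: (PrZ _ _).
rewrite mpolyXE_id; apply: (big_ind Pr Pr1 PrM) => k _.
elim: (m k) => [|e IHe]; first by rewrite expr0.
by rewrite exprS; apply: (PrM _ _ (PrX k) IHe).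
Qed.


Lemma iter_comm (T : Type) (f phi : T -> T) k :
  (forall x, f (phi x) = phi (f x)) -> forall x, iter k f (phi x) = phi (iter k f x).
Proof. by move=> H x; elim: k => [|k IH] //; rewrite !iterS IH H. Qed.

Lemma foldr_comm (T I : Type) (F : I -> T -> T) (phi : T -> T) (s : seq I) :
  (forall i x, F i (phi x) = phi (F i x)) -> forall x, foldr F (phi x) s = phi (foldr F x s).
Proof. by move=> H x; elim: s => [|i s IH] //=; rewrite IH H. Qed.

Lemma mderivm_shift (y : 'I_n -> C) (m : 'X_{1..n}) (p : P) :
  mderivm m (p \mPo shift_t y) = (mderivm m p) \mPo shift_t y.
Proof.
rewrite /mderivm; apply: foldr_comm => i x.
apply: iter_comm => z.
exact: mderiv_shift.
Qed.

Lemma prod0X (m : 'X_{1..n}) : \prod_(i < n) (0 : C) ^+ m i = (m == 0%MM)%:R.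
Proof.
have [->|hm] := eqVneq m 0%MM.
  by rewrite big1 // => i _; rewrite mnm0E expr0.
have [i hi] : exists i, m i != 0%N.
  apply/existsP; apply: contraR hm; rewrite negb_exists => /forallP H.
  by apply/eqP/mnmP => i; rewrite mnm0E; move: (H i); rewrite negbK => /eqP.
by rewrite (bigD1 i) //= expr0n (negbTE hi) mul0r.
Qed.

Lemma meval0_coef (p : P) : meval (fun _ => 0) p = p@_0.
Proof.
rewrite [in RHS](mpolyE p) raddf_sum /= mevalE; apply: eq_bigr => m _.
by rewrite mcoeffZ mcoeffX prod0X.
Qed.

Lemma meval_shift (y : 'I_n -> C) (p : P) :
  meval (fun _ => 0) (p \mPo shift_t y) = meval y p.
Proof.
rewrite comp_mpoly_meval; apply: meval_eq => i.
by rewrite tnth_mktuple mevalD mevalXU mevalC add0r.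
Qed.

Lemma taylor_coef (y : 'I_n -> C) (m : 'X_{1..n}) (p : P) :
  (p \mPo shift_t y)@_m *+ (\prod_(i < n) (m i)`!) = meval y (mderivm m p).
Proof.
have := mcoeff_mderivm m (p \mPo shift_t y) 0%MM.
rewrite addm0 -meval0_coef mderivm_shift meval_shift => ->.
congr (_ *+ _); apply: eq_bigr => i _.
by rewrite ffactnn.
Qed.

Lemma mderivs_mderivm (al : 'I_n -> nat) (p : P) :
  mderivs al p = mderivm [multinom al i | i < n] p.
Proof.
rewrite /mderivs /mderivm; congr foldr; apply/funext => j.
by rewrite mnmE.
Qed.

End Alg.

Local Open Scope classical_set_scope.

Section Loc.
Variables (R : realType) (n d : nat) (v : 'I_n -> 'I_d -> int) (w : 'I_n -> R).
Local Notation C := (Cx R).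
Local Notation LP := (mpoly (n + n) C).
Variable y : 'I_n -> C.

Lemma in_ideal_add (G : LP -> Prop) p q : in_ideal G p -> in_ideal G q -> in_ideal G (p + q).
Proof.
elim => [|g a p' hg _ IH] hq; first by rewrite add0r.
by rewrite -addrA; apply: in_ideal_gen => //; exact: IH.
Qed.

Lemma in_ideal_mull (G : LP -> Prop) a p : in_ideal G p -> in_ideal G (a * p).
Proof.
elim => [|g b p' hg _ IH]; first by rewrite mulr0; constructor.
by rewrite mulrDr mulrA; apply: in_ideal_gen.
Qed.

Lemma loc0 : loc_zero v w y 0.
Proof.
exists 1; split; first by rewrite meval1 oner_neq0.
by rewrite mulr0; constructor.
Qed.

Lemma locD p q : loc_zero v w y p -> loc_zero v w y q -> loc_zero v w y (p + q).
Proof.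
move=> [s1 [h1 i1]] [s2 [h2 i2]].
exists (s1 * s2); split; first by rewrite mevalM mulf_neq0.
have -> : s1 * s2 * (p + q) = s2 * (s1 * p) + s1 * (s2 * q).
  by rewrite mulrDr !mulrA [s2 * s1]mulrC.
by apply: in_ideal_add; apply: in_ideal_mull.
Qed.

Lemma locM a p : loc_zero v w y p -> loc_zero v w y (a * p).
Proof.
move=> [s [h i]]; exists s; split => //.
by rewrite mulrA [s * a]mulrC -mulrA; apply: in_ideal_mull.
Qed.

Lemma loc_sum (I : Type) (r : seq I) (Pr : pred I) (F : I -> LP) :
  (forall i, Pr i -> loc_zero v w y (F i)) -> loc_zero v w y (\sum_(i <- r | Pr i) F i).
Proof.
move=> H; apply: big_ind => //; [exact: loc0 | exact: locD].
Qed.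

Lemma mmap_eqh (S : ringType) (f : C -> S) (h1 h2 : 'I_n -> S) (p : mpoly n C) :
  h1 =1 h2 -> mmap f h1 p = mmap f h2 p.
Proof. by move=> H; rewrite /mmap; apply: eq_bigr => m _; rewrite (mmap1_eq _ H). Qed.

Lemma embed_taylor (p : mpoly n C) :
  embedP p = \sum_(m <- msupp (p \mPo shift_t y))
     ((p \mPo shift_t y)@_m)%:MP * \prod_(i < n) (@Rvar R n i - (y i)%:MP) ^+ m i.
Proof.
rewrite /embedP.
have -> : mmap (@mpolyC (n + n) C) (@Rvar R n) p =
          mmap (@mpolyC (n + n) C) (fun i => @Rvar R n i - (y i)%:MP) (p \mPo shift_t y).
  rewrite mmap_comp; apply: mmap_eqh => i.
  rewrite tnth_mktuple mmapD mmapC mmapX mmap1U.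
  by rewrite subrK.
by [].
Qed.
End Loc.

Local Open Scope classical_set_scope.

Section Main.
Variables (R : realType) (n d : nat) (v : 'I_n -> 'I_d -> int) (w : 'I_n -> R).
Local Notation C := (Cx R).
Local Notation LP := (mpoly (n + n) C).
Variable y : 'I_n -> C.

Lemma meval_Rvar (j : 'I_n) : meval (laurent_pt y) (@Rvar R n j) = y j.
Proof.
rewrite /Rvar mevalXU /laurent_pt.
by rewrite -[lshift n j]/(unsplit (inl j)) unsplitK.
Qed.

Lemma loc_J (T : {set 'I_n}) (Pq : pred 'I_n) :
  ~ fan_cone v w T ->
  (forall j, j \in T -> ~~ Pq j -> y j = 1) ->
  (forall j, j \in T -> Pq j -> y j != 1) ->
  loc_zero v w y (\prod_(j in T | ~~ Pq j) (@Rvar R n j - (y j)%:MP)).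
Proof.
move=> hT h1 h2.
exists (\prod_(j in T | Pq j) (1 - @Rvar R n j)); split.
  rewrite (big_morph (meval (laurent_pt y)) (@mevalM _ _ _) (meval1 _)).
  rewrite prodf_seq_neq0; apply/allP => j _; apply/implyP => /andP[jT pj].
  by rewrite mevalB meval1 meval_Rvar subr_eq0 eq_sym h2.
have E : \prod_(j in T | ~~ Pq j) (@Rvar R n j - (y j)%:MP) =
         \prod_(j in T | ~~ Pq j) (- (1 - @Rvar R n j)).
  apply: eq_bigr => j /andP[jT pj]; by rewrite h1 // mpolyC1 opprB.
rewrite E prodrN mulrCA.
have -> : \prod_(j in T | Pq j) (1 - @Rvar R n j) * \prod_(j in T | ~~ Pq j) (1 - @Rvar R n j)
   = \prod_(j in T) (1 - @Rvar R n j).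
  by rewrite [in RHS](bigID Pq).
rewrite -[X in in_ideal _ X]addr0.
apply: in_ideal_gen; last by constructor.
exact: K0_rel_SR.
Qed.


Lemma loc_term (Q : mpoly n C) (m : 'X_{1..n}) (N : nat) (Jp : pred 'I_n) :
  (forall j, loc_zero v w y ((@Rvar R n j - (y j)%:MP) ^+ N)) ->
  loc_zero v w y (\prod_(j | Jp j) (@Rvar R n j - (y j)%:MP)) ->
  ((forall i, (m i < N)%N) -> (exists j, Jp j && (m j == 0%N)) -> Q@_m = 0) ->
  loc_zero v w y ((Q@_m)%:MP * \prod_(i < n) (@Rvar R n i - (y i)%:MP) ^+ m i).
Proof.
move=> hN hJ h0.
set F := fun i => @Rvar R n i - (y i)%:MP.
case: (boolP [exists i, (N <= m i)%N]) => [/existsP [i hi]|hA].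
  rewrite (bigD1 i) //= -(subnK hi) exprD.
  have -> : (Q@_m)%:MP * (F i ^+ (m i - N) * F i ^+ N * \prod_(j < n | j != i) F j ^+ m j)
     = ((Q@_m)%:MP * (F i ^+ (m i - N) * \prod_(j < n | j != i) F j ^+ m j)) * F i ^+ N.
    by ring.
  by apply: locM; apply: hN.
have hlt : forall i, (m i < N)%N.
  by move=> i; rewrite ltnNge; apply: contra hA => hi; apply/existsP; exists i.
case: (boolP [exists j, Jp j && (m j == 0%N)]) => [/existsP [j hj]|hB].
  by rewrite h0 //; [rewrite mpolyC0 mul0r; exact: loc0 | exists j].
have hpos : forall j, Jp j -> (Jp j <= m j)%N.
  move=> j hj; rewrite hj lt0n; apply: contra hB => hm0; apply/existsP; exists j.
  by rewrite hj.
have -> : \prod_(i < n) F i ^+ m i =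
   \prod_(i < n) F i ^+ (m i - Jp i) * \prod_(i | Jp i) F i.
  rewrite [\prod_(i < n | Jp i) F i]big_mkcond /= -big_split /=; apply: eq_bigr => i _.
  case: (boolP (Jp i)) => hi.
    by move: (hpos i hi); rewrite hi => hm; rewrite -exprSr subn1 prednK.
  by rewrite subn0 mulr1.
by rewrite mulrA; apply: locM.
Qed.
End Main.

Local Open Scope classical_set_scope.

Lemma rg_zero (R : realType) (c : Cx R) (rho : R) (f : Cx R -> Cx R) :
  log_branch c rho f -> 0 < rho -> c = 1 ->
  ~ (exists k : nat, f c / two_pi_i R = k%:R) -> rgamma (f c / two_pi_i R + 1) = 0.
Proof.
move=> [_ hf] r0 c1 hk.
have hc : cexp (f c) = 1.
  by rewrite hf ?c1 // /disc /= subrr normr0 (@ltcR R).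
have [k hk'] := cexp_eq1 hc.
have e : f c / two_pi_i R = k%:~R.
  by rewrite hk' [two_pi_i R * _]mulrC mulfK // two_pi_i_neq0.
rewrite e; apply: rgamma_negint.
case: k {hk'} e => // m e.
by exfalso; apply: hk; exists m; rewrite e.
Qed.
Theorem proposition3p2
  (R : realType) (n d : nat)
  (* A = {v_1, ..., v_n} in N = Z^d, distinct, generating N *)
  (v : 'I_n -> 'I_d -> int)
  (v_inj : injective v)
  (v_gen : forall x : 'I_d -> int,
      exists c : 'I_n -> int, forall k, x k = \sum_(j < n) c j * v j k)
  (* h : N -> Z with h(v_j) = 1 *)
  (h : 'I_d -> int) (hv : forall j, \sum_(k < d) h k * v j k = 1)
  (* Sigma: the fan of a regular triangulation, given by heights w *)
  (w : 'I_n -> R) (w_reg : regular_triangulation_heights v w)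
  (* v in Box(Sigma): v = sum_j q_j v_j, 0 <= q_j < 1, supported on a cone S *)
  (S : {set 'I_n}) (HS : fan_cone v w S)
  (q : 'I_n -> R) (hq : forall j, 0 <= q j < 1)
  (hqS : forall j, j \notin S -> q j = 0)
  (vb : 'I_d -> int)
  (hvb : forall k, (vb k)%:~R = \sum_(j < n) q j * (v j k)%:~R)
  (* branches log_j of the logarithm on discs B_j = B(y_j, rho_j), 0 notin B_j *)
  (rho : 'I_n -> R) (hrho : forall j, 0 < rho j < 1)
  (logb : 'I_n -> Cx R -> Cx R)
  (hlog : forall j, log_branch (boxy q j) (rho j) (logb j))
  (* a point z with nonzero coordinates and a choice of arg z_j *)
  (z : 'I_n -> Cx R) (theta : 'I_n -> R)
  (hz : forall j, z j != 0)
  (htheta : forall j, z j = (complex.Re (`|z j| : R[i]))%:C * cexp ('i * (theta j)%:C)) :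
  (* unless there is a cone sigma containing sigma(v) whose rays contain all
     v_j with log_j(y_j)/(2 pi i) not a nonnegative integer ... *)
  ~ (exists K : {set 'I_n}, fan_cone v w K /\
        (forall j, 0 < q j -> j \in K) /\
        (forall j, ~ (exists k : nat, logb j (boxy q j) / two_pi_i R = k%:R) -> j \in K)) ->
  (* ... the operator phi(z, R) on (K_0)_v is zero: phi(z, R) = P(R) on (K_0)_v
     for any polynomial P whose derivatives at y^v agree with those of phi(z, .)
     up to an order N at which all R_j - y_j are nilpotent on (K_0)_v *)
  forall (N : nat) (P : mpoly n (Cx R)),
    (forall j, loc_zero v w (boxy q) ((@Rvar R n j - (boxy q j)%:MP) ^+ N)) ->
    (forall al : 'I_n -> nat, (forall j, (al j < N)%N) ->
        meval (boxy q) (mderivs al P) = pderivs al (phi logb z theta) (boxy q)) ->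
    loc_zero v w (boxy q) (embedP P).
Proof.
move=> Hneg N P hN hder.
pose T : {set 'I_n} := finset (fun j => (0 < q j) ||
   `[< ~ (exists k : nat, logb j (boxy q j) / two_pi_i R = k%:R) >]).
have hT : ~ fan_cone v w T.
  move=> hc; apply: Hneg; exists T; split => //; split => j hj; rewrite inE.
    by rewrite hj.
  by apply/orP; right; apply/asboolP.
have hq0 : forall j, ~~ (0 < q j) -> q j = 0.
  move=> j; have /andP[h0 _] := hq j.
  by rewrite lt_neqAle h0 andbT negbK => /eqP <-.
have hy1 : forall j, ~~ (0 < q j) -> boxy q j = 1.
  by move=> j /hq0 e; rewrite /boxy e rmorph0 mulr0 cexp0.
have hyn1 : forall j, 0 < q j -> boxy q j != 1.
  move=> j hj; rewrite /boxy; apply: cexp_2piq.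
  by rewrite hj; case/andP: (hq j).
have hJ := @loc_J R n d v w (boxy q) T (fun j => 0 < q j) hT
   (fun j _ h => hy1 j h) (fun j _ h => hyn1 j h).
have hrg : forall j, j \in T -> ~~ (0 < q j) ->
    rgamma (logb j (boxy q j) / two_pi_i R + 1) = 0.
  move=> j; rewrite inE => /orP[-> //|hnn] hj.
  apply: (rg_zero (hlog j)); first by case/andP: (hrho j).
    exact: hy1.
  exact/asboolP.
have hvan : forall (al : 'I_n -> nat) j, j \in T -> ~~ (0 < q j) -> al j = 0%N ->
    pderivs al (phi logb z theta) (boxy q) = 0.
  move=> al j hjT hj ha.
  apply: (@pderivs_vanish R n al _ j (boxy q j)) => //.
  move=> r hr; exact: (phi_vanish z theta (hrg j hjT hj) hr).
rewrite (embed_taylor (boxy q) P).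
apply: loc_sum => m _.
apply: (@loc_term R n d v w (boxy q) _ m N (fun j => (j \in T) && ~~ (0 < q j))) => //.
move=> hlt [j /andP[/andP[hjT hj] /eqP hm0]].
have E : meval (boxy q) (mderivm m P) = 0.
  have -> : mderivm m P = mderivs (fun i => m i) P.
    by rewrite mderivs_mderivm; congr mderivm; apply/mnmP => i; rewrite mnmE.
  by rewrite hder //; exact: (hvan _ j).
move: (taylor_coef (boxy q) m P); rewrite E => /eqP; rewrite mulrn_eq0 => /orP[/eqP hK0|/eqP //].
have : (0 < \prod_(i < n) (m i)`!)%N by apply: prodn_gt0 => i; exact: fact_gt0.
by rewrite hK0.
Qed.
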